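(* Assume the contextual smoothness condition with parameters $\delta>0$, $\mu\in(0,1)$, and let $\gamma=\delta(1-\mu)^{-1}$. For any strategies $w^j_t\in\Delta_K$ ($j\in[J]$, $t\in[T]$) played in the game protocol, with $\mathbf w_t=w^1_t\otimes\dots\otimes w^J_t$, $$\frac1T\sum_{t=1}^TC_t(\mathbf w_t)\le\gamma C^\star+\frac{1}{(1-\mu)T}\sum_{j=1}^J\mathrm{Reg}^j_T .$$
   Context: Setting. There are $J\ge1$ agents indexed by $j\in[J]$. Agent $j$ has a finite action set $\mathcal A^j=\{a^j_1,\dots,a^j_K\}$ with $K$ elements; $\mathcal A=\mathcal A^1\times\dots\times\mathcal A^J$, $\mathcal A^{-j}=\prod_{i\ne j}\mathcal A^i$, $\mathbf a=(a^j,\mathbf a^{-j})$. $\Delta_K$ is the probability simplex in $\mathbb R^K$, and $w\in\Delta_K$ is identified with the distribution on $\mathcal A^j$ putting mass $w[k]$ on $a^j_k$. The context set $\mathcal Z=\{z_1,\dots,z_m\}\subset\mathbb R^d$ is finite. Agent $j$ has $\phi^j:\mathcal A\to\mathbb R^d$ and cost $c^j(\mathbf w,Z)=\mathbb E_{\mathbf a\sim\mathbf w}[\langle\phi^j(\mathbf a),Z\rangle]$ (for a pure profile $\mathbf a$, $c^j(\mathbf a,Z)=\langle\phi^j(\mathbf a),Z\rangle$); for $w\in\Delta_K$ write $c^j(w,\mathbf w^{-j},Z)=c^j(w\otimes\mathbf w^{-j},Z)$. Standing assumption (bounded costs): $|\langle Z,\phi^j(\mathbf a)\rangle|\le1$.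 Game protocol: $T$ rounds, fixed sequence $Z_1,\dots,Z_T\in\mathcal Z$; at round $t$ each agent $j$ plays $w^j_t\in\Delta_K$ and incurs $c^j(w^j_t,\mathbf w^{-j}_t,Z_t)$ with $\mathbf w^{-j}_t=\bigotimes_{i\ne j}w^i_t$. Contextual external regret: $\mathrm{Reg}^j_T=\sum_{t=1}^Tc^j(w^j_t,\mathbf w^{-j}_t,Z_t)-\min_{\pi:\mathcal Z\to\Delta_K}\sum_{t=1}^Tc^j(\pi(Z_t),\mathbf w^{-j}_t,Z_t)$. Social cost: $C_t(\mathbf w)=\sum_{j=1}^Jc^j(\mathbf w,Z_t)$, and $C^\star=\min_{\boldsymbol\rho:\mathcal Z\to\mathcal A}T^{-1}\sum_{t=1}^T\sum_{j=1}^Jc^j(\boldsymbol\rho(Z_t),Z_t)$. Contextual smoothness condition with parameters $(\delta,\mu)$: for all $\mathbf a,\mathbf a_\star\in\mathcal A$ and $z\in\mathcal Z$, $\sum_{j}\langle z,\phi^j(a^j_\star,\mathbf a^{-j})\rangle\le\sum_j[\delta\langle z,\phi^j(\mathbf a_\star)\rangle+\mu\langle z,\phi^j(\mathbf a)\rangle]$. *)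

(* Defs.v *)
From HB Require Import structures.
From mathcomp Require Import all_boot all_order all_algebra.
From mathcomp Require Import classical_sets reals.
Set Implicit Arguments. Unset Strict Implicit. Unset Printing Implicit Defensive.
Import Order.TTheory GRing.Theory Num.Theory.
Local Open Scope ring_scope.
Local Open Scope classical_set_scope.

Section Game.
Variables (R : realType) (J K d : nat).

Definition profile := {ffun 'I_J -> 'I_K}.

Definition dotp (u v : 'rV[R]_d) : R := \sum_(i < d) u ord0 i * v ord0 i.

Definition in_simplex (w : 'I_K -> R) : Prop :=
  (forall k, 0 <= w k) /\ \sum_(k < K) w k = 1.

Definition upd_pure (a : profile) (j : 'I_J) (k : 'I_K) : profile :=
  [ffun i => if i == j then k else a i].

Definition upd_mixed (w : 'I_J -> 'I_K -> R) (j : 'I_J) (v : 'I_K -> R)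
  : 'I_J -> 'I_K -> R := fun i => if i == j then v else w i.

Definition exp_cost (phi : 'I_J -> profile -> 'rV[R]_d) (j : 'I_J)
  (w : 'I_J -> 'I_K -> R) (z : 'rV[R]_d) : R :=
  \sum_(a : profile) (\prod_(i < J) w i (a i)) * dotp (phi j a) z.

(* Contexts: Z = {zv c | c : 'I_m} (zv injective); Z_t = zv (zt t). *)
Definition contextual_regret (m T : nat) (zv : 'I_m -> 'rV[R]_d)
  (zt : 'I_T -> 'I_m) (phi : 'I_J -> profile -> 'rV[R]_d)
  (w : 'I_T -> 'I_J -> 'I_K -> R) (j : 'I_J) : R :=
  \sum_(t < T) exp_cost phi j (w t) (zv (zt t))
  - inf [set x : R | exists pi : 'I_m -> 'I_K -> R,
           (forall c, in_simplex (pi c)) /\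
           x = \sum_(t < T) exp_cost phi j (upd_mixed (w t) j (pi (zt t))) (zv (zt t))].

Definition social_cost (phi : 'I_J -> profile -> 'rV[R]_d)
  (w : 'I_J -> 'I_K -> R) (z : 'rV[R]_d) : R :=
  \sum_(j < J) exp_cost phi j w z.

Definition opt_cost (m T : nat) (zv : 'I_m -> 'rV[R]_d) (zt : 'I_T -> 'I_m)
  (phi : 'I_J -> profile -> 'rV[R]_d) : R :=
  inf [set x : R | exists rho : 'I_m -> profile,
         x = T%:R^-1 * \sum_(t < T) \sum_(j < J) dotp (phi j (rho (zt t))) (zv (zt t))].

Definition ctx_smooth (m : nat) (zv : 'I_m -> 'rV[R]_d)
  (phi : 'I_J -> profile -> 'rV[R]_d) (delta mu : R) : Prop :=
  forall (a astar : profile) (c : 'I_m),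
    \sum_(j < J) dotp (phi j (upd_pure a j (astar j))) (zv c)
    <= \sum_(j < J) (delta * dotp (phi j astar) (zv c) + mu * dotp (phi j a) (zv c)).

End Game.

(* Main.v *)
Require Import Defs.
From HB Require Import structures.
From mathcomp Require Import all_boot all_order all_algebra.
From mathcomp Require Import classical_sets reals.
From mathcomp Require Import ring lra.
Import Order.TTheory GRing.Theory Num.Theory.
Local Open Scope ring_scope.

Set Implicit Arguments.
Section H.
Variables (R : realType) (J K d : nat).

Lemma upd_pure_j (a : profile J K) j k : upd_pure a j k j = k.
Proof. by rewrite /upd_pure ffunE eqxx. Qed.

Lemma upd_pure_upd (a : profile J K) j k k' :
  upd_pure (upd_pure a j k) j k' = upd_pure a j k'.
Proof. by apply/ffunP => i; rewrite !ffunE; case: (i == j). Qed.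

Lemma upd_pure_id (a : profile J K) j k : a j = k -> upd_pure a j k = a.
Proof. by move=> <-; apply/ffunP => i; rewrite !ffunE; case: eqP => // ->. Qed.

Lemma sum_prod1 (w : 'I_J -> 'I_K -> R) : (forall i, in_simplex (w i)) ->
  \sum_(a : profile J K) \prod_i w i (a i) = 1.
Proof.
move=> hw; rewrite -(bigA_distr_bigA (fun i k => w i k)).
by apply: big1 => i _; case: (hw i).
Qed.

Lemma prod_ge0' (w : 'I_J -> 'I_K -> R) (a : profile J K) :
  (forall i, in_simplex (w i)) -> 0 <= \prod_i w i (a i).
Proof. by move=> hw; apply: prodr_ge0 => i _; case: (hw i). Qed.

Lemma marg (w : 'I_J -> 'I_K -> R) j k (f : profile J K -> R) :
  \sum_(k' < K) w j k' = 1 ->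
  \sum_(a : profile J K) (\prod_i w i (a i)) * f (upd_pure a j k) =
  \sum_(a : profile J K)
     (\prod_i upd_mixed w j (fun k' => (k' == k)%:R) i (a i)) * f a.
Proof.
move=> hs.
pose P (a : profile J K) := \prod_(i | i != j) w i (a i).
have HP a k0 : P (upd_pure a j k0) = P a.
  by apply: eq_bigr => i /negbTE hi; rewrite /upd_pure ffunE hi.
have E1 (a : profile J K) : \prod_i w i (a i) = w j (a j) * P a by rewrite (bigD1 j).
have E2 (a : profile J K) : \prod_i upd_mixed w j (fun k' => (k' == k)%:R) i (a i)
            = (a j == k)%:R * P a.
  rewrite (bigD1 j) //= /upd_mixed eqxx; congr (_ * _).
  by apply: eq_bigr => i /negbTE ->.
pose S := \sum_(a : profile J K | a j == k) P a * f a.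
have R1 : \sum_(a : profile J K)
     (\prod_i upd_mixed w j (fun k' => (k' == k)%:R) i (a i)) * f a = S.
  rewrite /S [RHS]big_mkcond; apply: eq_bigr => a _; rewrite E2.
  by case: eqP => _; rewrite ?mul1r ?mul0r.
rewrite R1 (partition_big (fun a : profile J K => a j) xpredT) //=.
transitivity (\sum_(k' < K) w j k' * S); last by rewrite -big_distrl /= hs mul1r.
apply: eq_bigr => k' _.
rewrite (eq_bigr (fun a => w j k' * (P (upd_pure a j k) * f (upd_pure a j k))));
  last by move=> a /eqP <-; rewrite E1 HP mulrA.
rewrite -big_distrr /=; congr (_ * _).
rewrite /S (reindex_onto (fun b => upd_pure b j k') (fun b => upd_pure b j k)).
  apply: eq_big => b; rewrite ?upd_pure_upd ?upd_pure_j ?eqxx /=.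
    by apply/eqP/eqP => [<-|h]; [rewrite upd_pure_j | rewrite upd_pure_id].
  by move=> /eqP ->.
by move=> b /eqP hb; rewrite upd_pure_upd upd_pure_id.
Qed.

End H.
Unset Implicit Arguments.

Theorem proposition4 (R : realType) (J K d m T : nat)
  (zv : 'I_m -> 'rV[R]_d) (zt : 'I_T -> 'I_m)
  (phi : 'I_J -> profile J K -> 'rV[R]_d) (delta mu : R)
  (w : 'I_T -> 'I_J -> 'I_K -> R) :
  (0 < J)%N -> (0 < T)%N ->
  injective zv ->
  (forall (j : 'I_J) (a : profile J K) (c : 'I_m),
      `|dotp (zv c) (phi j a)| <= 1) ->
  0 < delta -> 0 < mu -> mu < 1 ->
  ctx_smooth zv phi delta mu ->
  (forall t j, in_simplex (w t j)) ->
  T%:R^-1 * \sum_(t < T) social_cost phi (w t) (zv (zt t))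
  <= delta / (1 - mu) * opt_cost zv zt phi
     + ((1 - mu) * T%:R)^-1 * \sum_(j < J) contextual_regret zv zt phi w j.
Proof.
move=> hJ hT hinj hb hd hmu hmu1 hs hw.
have k0 : 'I_K.
  case: (pickP (fun k : 'I_K => true)) => [k0 _|h0]; first exact: k0.
  exfalso; case: (hw (Ordinal hT) (Ordinal hJ)) => _.
  rewrite big1; last by move=> i _; have := h0 i.
  by move=> /eqP; rewrite eq_sym oner_eq0.
have dc (u v : 'rV[R]_d) : dotp u v = dotp v u.
  by rewrite /dotp; apply: eq_bigr => i _; rewrite mulrC.
have cost_lb j (w' : 'I_J -> 'I_K -> R) c : (forall i, in_simplex (w' i)) ->
    -1 <= exp_cost phi j w' (zv c).
  move=> hw'; rewrite /exp_cost.
  rewrite [X in X <= _](_ : _ = \sum_(a : profile J K) (\prod_i w' i (a i)) * -1);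
    last by rewrite -big_distrl /= (sum_prod1 w' hw') mul1r.
  apply: ler_sum => a _; apply: ler_wpM2l; first exact: prod_ge0'.
  by have := hb j a c; rewrite dc ler_norml => /andP[].
have upd_simplex (w' : 'I_J -> 'I_K -> R) j v : (forall i, in_simplex (w' i)) ->
    in_simplex v -> forall i, in_simplex (upd_mixed w' j v i).
  by move=> hw' hv i; rewrite /upd_mixed; case: (i == j).
set A := \sum_(t < T) social_cost phi (w t) (zv (zt t)).
set Reg := \sum_(j < J) contextual_regret zv zt phi w j.
set I := opt_cost zv zt phi.
have key : forall rho : 'I_m -> profile J K, (1 - mu) * A - Reg <=
    delta * \sum_(t < T) \sum_(j < J) dotp (phi j (rho (zt t))) (zv (zt t)).
  move=> rho.
  pose pi (j : 'I_J) (c : 'I_m) (k : 'I_K) : R := (k == rho c j)%:R.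
  have hpi j c : in_simplex (pi j c).
    split=> [k|]; first by rewrite /pi ler0n.
    rewrite (bigD1 (rho c j)) //= /pi eqxx big1 ?addr0 // => k /negbTE ->.
    by [].
  pose dev j t := exp_cost phi j (upd_mixed (w t) j (pi j (zt t))) (zv (zt t)).
  pose cj j t := exp_cost phi j (w t) (zv (zt t)).
  have hreg : \sum_(j < J) (\sum_(t < T) cj j t - \sum_(t < T) dev j t) <= Reg.
    apply: ler_sum => j _; rewrite /contextual_regret lerD2l lerN2.
    apply: ge_inf; last by exists (pi j).
    exists (- T%:R) => x [p [hp ->]].
    have -> : (1 *- T : R) = \sum_(t < T) (-1 : R) by rewrite sumrN sumr_const card_ord.
    apply: ler_sum => t _; apply: cost_lb; apply: upd_simplex => //.
  have hdev : \sum_(j < J) \sum_(t < T) dev j t <=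
      delta * \sum_(t < T) \sum_(j < J) dotp (phi j (rho (zt t))) (zv (zt t))
      + mu * A.
    rewrite exchange_big /= /A mulr_sumr mulr_sumr -big_split /=.
    apply: ler_sum => t _.
    set z := zv (zt t).
    set ast := rho (zt t).
    pose p (a : profile J K) := \prod_i w t i (a i).
    have hdevE j : dev j t = \sum_(a : profile J K) p a * dotp (phi j (upd_pure a j (ast j))) z.
      symmetry; apply: (marg (w t) j (ast j) (fun a => dotp (phi j a) z)).
      by case: (hw t j).
    under eq_bigr do rewrite hdevE.
    rewrite exchange_big /=.
    apply: le_trans (_ : \sum_(a : profile J K) p a *
      \sum_(j < J) (delta * dotp (phi j ast) z + mu * dotp (phi j a) z) <= _).
      apply: ler_sum => a _; rewrite -mulr_sumr; apply: ler_wpM2l.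
        exact: prod_ge0'.
      exact: hs.
    rewrite le_eqVlt; apply/orP; left; apply/eqP.
    rewrite (eq_bigr (fun a => p a * (\sum_(j < J) delta * dotp (phi j ast) z) +
       p a * (\sum_(j < J) mu * dotp (phi j a) z))); last first.
      by move=> a _; rewrite -mulrDr -big_split.
    rewrite big_split /= -big_distrl /= (sum_prod1 (w t)) // mul1r -mulr_sumr.
    congr (_ + _).
    rewrite /social_cost mulr_sumr.
    rewrite [RHS](eq_bigr (fun j => \sum_(a : profile J K) mu * (p a * dotp (phi j a) z)));
      last by move=> j _; rewrite /exp_cost mulr_sumr.
    rewrite [RHS]exchange_big /=.
    apply: eq_bigr => a _; rewrite mulr_sumr; apply: eq_bigr => j _.
    by rewrite mulrCA.
  have hA : \sum_(j < J) \sum_(t < T) cj j t = A.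
    by rewrite exchange_big.
  move: hreg hdev; rewrite sumrB hA.
  set D := \sum_(j < J) \sum_(t < T) dev j t.
  set V := \sum_(t < T) _.
  move=> h1 h2.
  have -> : (1 - mu) * A = A - mu * A by rewrite mulrBl mul1r.
  lra.
have Tpos : 0 < T%:R :> R by rewrite ltr0n.
have spos : 0 < 1 - mu by rewrite subr_gt0.
have Tn0 : T%:R != 0 :> R by rewrite gt_eqF.
have sn0 : 1 - mu != 0 by rewrite gt_eqF.
have dn0 : delta != 0 by rewrite gt_eqF.
have hI : ((1 - mu) * A - Reg) / (delta * T%:R) <= I.
  apply: lb_le_inf.
    by eexists; exists (fun _ => [ffun=> k0]).
  move=> x [rho ->]; rewrite ler_pdivrMr ?mulr_gt0 //.
  apply: le_trans (key rho) _.
  set V := \sum_(t < T) _.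
  rewrite le_eqVlt; apply/orP; left; apply/eqP; field.
  by rewrite Tn0.
apply: le_trans (_ : _ <= delta / (1 - mu) * (((1 - mu) * A - Reg) / (delta * T%:R))
   + ((1 - mu) * T%:R)^-1 * Reg) _.
  rewrite le_eqVlt; apply/orP; left; apply/eqP; field.
  by rewrite Tn0 sn0 dn0.
rewrite lerD2r; apply: ler_wpM2l => //.
by rewrite divr_ge0 // ltW.
Qed.
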